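(* Let $H$ be a $3$-graph, $K_H=3v(H)^3$, let $\varepsilon\le 1/5$ and $C\ge 1$ be constants. Then there is $n_0$ such that the following holds for all $n\ge n_0$. Let $G$ be a $3$-partite $3$-graph with vertex classes $X,Y,Z$ each of size $n$, and let $\mathcal{L}$ be a bipartite graph between $X$ and $Y$ with exactly $(C/2)n^{2-\varepsilon}$ edges, such that the number of $H$-forbidden $4$-cycles (with respect to $G$) contained in $\mathcal{L}$ is at most $K_H\, n^{3+1/5-\varepsilon}$. Then there is a subset $Y'\subseteq Y$ with $|Y'|\ge n^{1-\varepsilon}/4$ such that (1) at most $(400/C)\binom{|Y'|}{2}$ pairs of vertices of $Y'$ are bad, and (2) at most $(600/C)\binom{|Y'|}{3}$ triples of vertices of $Y'$ are bad.
   Context: A $3$-graph is a $3$-uniform hypergraph; $v(\cdot)$ denotes the number of vertices. $G$ is $3$-partite with classes $X,Y,Z$: every edge contains exactly one vertex of each class. For $z\in Z$, the link graph $\mathcal{L}_z$ is the bipartite graph between $X$ and $Y$ with edges the pairs $xy$ such that $\{x,y,z\}$ is an edge of $G$. A $4$-cycle between $X$ and $Y$ is a $4$-cycle in the complete bipartite graph on $X\cup Y$; it is the boundary of a $4$-disk with centre $z\in Z$ exactly when it is contained in $\mathcal{L}_z$. With $K_H=3v(H)^3$, such a $4$-cycle is $H$-forbidden if the number of $z\in Z$ with the cycle contained in $\mathcal{L}_z$ is at most $K_H$, and $H$-admissible otherwise. For a set $S$ of vertices, $\Gamma(S)$ denotes the set of common neighbours of $S$ in the bipartite graph $\mathcal{L}$;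 $\Gamma(y_1,y_2)=\Gamma(\{y_1,y_2\})$ etc. A pair $y_1y_2$ of distinct vertices of $Y$ is good if $|\Gamma(y_1,y_2)|\ge n^{1-2\varepsilon}$ and the number of $H$-forbidden $4$-cycles in $\mathcal{L}$ containing both $y_1$ and $y_2$ is at most $(K_H/C)\,n^{1-3\varepsilon}\,|\Gamma(y_1,y_2)|$; otherwise it is bad. A triple $y_1y_2y_3$ of distinct vertices of $Y$ is good if $|\Gamma(y_1,y_2,y_3)|\ge n^{1-3\varepsilon}$, and bad otherwise. *)

(* Defs.v *)
From Stdlib Require Import Reals.
From mathcomp Require Import all_boot.

Set Implicit Arguments.
Unset Strict Implicit.
Unset Printing Implicit Defensive.

(* The three vertex classes X, Y, Z are each modelled by 'I_n.
   A 3-partite 3-graph G with classes X,Y,Z is a set of triples (x,y,z).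
   A bipartite graph L between X and Y is a set of pairs (x,y). *)

Definition Rleb (a b : R) : bool := if Rle_dec a b then true else false.
Definition Rltb (a b : R) : bool := if Rlt_dec a b then true else false.

Definition npow (n : nat) (a : R) : R := Rpower (INR n) a.

Definition uniform3 (VH : finType) (EH : {set {set VH}}) : Prop :=
  forall e, e \in EH -> #|e| = 3.

Definition KH (VH : finType) : nat := 3 * #|VH| ^ 3.

Definition link n (G : {set 'I_n * 'I_n * 'I_n}) (z : 'I_n) : {set 'I_n * 'I_n} :=
  [set p | (p.1, p.2, z) \in G].

(* A 4-cycle between X and Y in the complete bipartite graph is determined by
   its two X-vertices and its two Y-vertices. *)
Definition is_c4 n (c : {set 'I_n} * {set 'I_n}) : bool :=
  (#|c.1| == 2) && (#|c.2| == 2).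

Definition c4_in n (A : {set 'I_n * 'I_n}) (c : {set 'I_n} * {set 'I_n}) : bool :=
  [forall x in c.1, forall y in c.2, (x, y) \in A].

(* number of z in Z whose link graph contains c (number of 4-disks with boundary c) *)
Definition disk_count n (G : {set 'I_n * 'I_n * 'I_n}) (c : {set 'I_n} * {set 'I_n}) : nat :=
  #|[set z | c4_in (link G z) c]|.

(* H-forbidden: at most K disks (K = K_H) *)
Definition forbidden n (K : nat) (G : {set 'I_n * 'I_n * 'I_n}) c : bool :=
  disk_count G c <= K.

Definition forb_cycles n (K : nat) (G : {set 'I_n * 'I_n * 'I_n}) (L : {set 'I_n * 'I_n}) :
  {set {set 'I_n} * {set 'I_n}} :=
  [set c | [&& is_c4 c, c4_in L c & forbidden K G c]].

Definition Gamma n (L : {set 'I_n * 'I_n}) (S : {set 'I_n}) : {set 'I_n} :=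
  [set x | [forall y in S, (x, y) \in L]].

Definition good_pair n (K : nat) (C eps : R) (G : {set 'I_n * 'I_n * 'I_n})
  (L : {set 'I_n * 'I_n}) (P : {set 'I_n}) : bool :=
  Rleb (npow n (1 - 2 * eps)) (INR #|Gamma L P|) &&
  Rleb (INR #|[set c in forb_cycles K G L | P \subset c.2]|)
       (INR K / C * npow n (1 - 3 * eps) * INR #|Gamma L P|).

Definition bad_pairs n (K : nat) (C eps : R) (G : {set 'I_n * 'I_n * 'I_n})
  (L : {set 'I_n * 'I_n}) (Y' : {set 'I_n}) : {set {set 'I_n}} :=
  [set P : {set 'I_n} | [&& P \subset Y', #|P| == 2 & ~~ good_pair K C eps G L P]].

Definition good_triple n (eps : R) (L : {set 'I_n * 'I_n}) (T : {set 'I_n}) : bool :=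
  Rleb (npow n (1 - 3 * eps)) (INR #|Gamma L T|).

Definition bad_triples n (eps : R) (L : {set 'I_n * 'I_n}) (Y' : {set 'I_n}) :
  {set {set 'I_n}} :=
  [set T : {set 'I_n} | [&& T \subset Y', #|T| == 3 & ~~ good_triple eps L T]].

(* Main.v *)
Require Import Defs.
From Stdlib Require Import Reals Lra Lia Psatz Classical.
From mathcomp Require Import all_boot.
From mathcomp Require Import Rstruct.
Set Implicit Arguments.
Unset Strict Implicit.

Definition Nx n (L : {set 'I_n * 'I_n}) (x : 'I_n) : {set 'I_n} := [set y | (x, y) \in L].

Lemma card_sum (J : finType) (B : {set J}) (P : pred J) :
  #|[set j in B | P j]| = \sum_(j in B) (P j : nat).
Proof.
rewrite -sum1_card big_mkcond /= [RHS]big_mkcond /=.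
apply: eq_bigr => j _; rewrite !inE; by case: (j \in B); case: (P j).
Qed.

Lemma exch (I J : finType) (A : {set I}) (B : {set J}) (Rl : I -> J -> bool) :
  \sum_(i in A) #|[set j in B | Rl i j]| = \sum_(j in B) #|[set i in A | Rl i j]|.
Proof.
under eq_bigr do rewrite card_sum.
rewrite exchange_big /=; apply: eq_bigr => j _; by rewrite card_sum.
Qed.

Lemma gammaE n (L : {set 'I_n * 'I_n}) S :
  Gamma L S = [set x in [set: 'I_n] | S \subset Nx L x].
Proof.
apply/setP => x; rewrite !inE; apply/forallP/subsetP.
- by move=> h y yS; rewrite inE; move: (h y); rewrite yS.
- by move=> h y; apply/implyP => yS; move: (h y yS); rewrite inE.
Qed.

Lemma DC n (L : {set 'I_n * 'I_n}) (F : {set {set 'I_n}}) :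
  \sum_(x in [set: 'I_n]) #|[set S in F | S \subset Nx L x]| = \sum_(S in F) #|Gamma L S|.
Proof. rewrite exch; apply: eq_bigr => S _; by rewrite gammaE. Qed.

Lemma sumdeg n (L : {set 'I_n * 'I_n}) : \sum_(x in [set: 'I_n]) #|Nx L x| = #|L|.
Proof.
have -> : #|L| = \sum_(p : 'I_n * 'I_n) (p \in L : nat).
  by rewrite -sum1_card big_mkcond.
have -> : \sum_(x in [set: 'I_n]) #|Nx L x| = \sum_x \sum_y ((x, y) \in L : nat).
  apply: eq_big => x; first by rewrite inE.
  move=> _; rewrite -sum1_card big_mkcond; apply: eq_bigr => y _; by rewrite inE.
rewrite (pair_big xpredT xpredT (fun x y => ((x, y) \in L : nat))) /=.
by apply: eq_bigr => -[].
Qed.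

Lemma ffact_le n m : n ^_ m <= n ^ m.
Proof.
elim: m n => [|m IH] n; first by rewrite ffactn0 expn0.
rewrite ffactnS expnS leq_mul //; apply: leq_trans (IH _) _.
case: m {IH} => [|m]; first by rewrite !expn0.
by rewrite leq_exp2r // leq_pred.
Qed.

Local Open Scope R_scope.
Lemma Rle_big (I : finType) (P : pred I) (F1 F2 : I -> R) :
  (forall i, P i -> (F1 i <= F2 i)) ->
  (\big[Rplus/0]_(i | P i) F1 i <= \big[Rplus/0]_(i | P i) F2 i).
Proof.
move=> h; apply: (big_ind2 (fun x y => (x <= y))) => //.
- exact: Rle_refl.
- move=> *; exact: Rplus_le_compat.
Qed.

Lemma INR_big (I : finType) (P : pred I) (F : I -> nat) :
  INR (\sum_(i | P i) F i) = \big[Rplus/0]_(i | P i) INR (F i).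
Proof. apply: (big_morph INR) => //; exact: plus_INR. Qed.

Lemma big_constR (I : finType) (A : {set I}) (c : R) :
  \big[Rplus/0]_(i in A) c = (INR #|A| * c).
Proof.
rewrite big_const; elim: #|A| => [|k IH] /=; first by rewrite Rmult_0_l.
rewrite IH.
case: k {IH} => [|k] /=; ring.
Qed.

Lemma big_distrR (I : finType) (P : pred I) (c : R) (F : I -> R) :
  \big[Rplus/0]_(i | P i) (c * F i) = (c * \big[Rplus/0]_(i | P i) F i).
Proof. by rewrite big_distrr. Qed.

Lemma big_splitR (I : finType) (P : pred I) (F G : I -> R) :
  \big[Rplus/0]_(i | P i) (F i + G i) = (\big[Rplus/0]_(i | P i) F i + \big[Rplus/0]_(i | P i) G i).
Proof. by rewrite big_split. Qed.

Lemma powfacts (n : nat) (eps : R) : (256 <= n)%N -> eps <= 1/5 ->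
  let nr := INR n in let a := npow n (1 - eps) in let b := npow n (1/5) in
  [/\ npow n (2 - eps) = nr * a, npow n (1 - 2 * eps) * nr = a * a,
      npow n (1 - 3 * eps) * (nr * nr) = a * a * a,
      npow n (3 + 1/5 - eps) = nr * nr * a * b &
      [/\ b * (nr * nr * nr) <= a * a * a * a, 16 <= a, 0 < b & 256 <= nr]].
Proof.
move=> hn he nr a b.
have hnr : 256 <= nr.
  rewrite /nr; replace 256 with (INR 256); last by simpl; ring.
  apply: le_INR; apply/leP; exact: hn.
have n0 : 0 < nr by lra.
have P1 : Rpower nr 1 = nr by apply: Rpower_1.
have P2 : Rpower nr 2 = nr * nr.
  replace 2 with (INR 2) by (simpl; ring). rewrite Rpower_pow //=; ring.
have P3 : Rpower nr 3 = nr * nr * nr.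
  replace 3 with (INR 3) by (simpl; ring). rewrite Rpower_pow //=; ring.
rewrite /a /b /npow -/nr; split.
- have e := Rpower_plus 1 (1 - eps) nr; rewrite P1 in e.
  by rewrite -e; congr Rpower; ring.
- have e := Rpower_plus (1 - 2 * eps) 1 nr; rewrite P1 in e.
  have e2 := Rpower_plus (1 - eps) (1 - eps) nr.
  by rewrite -e -e2; congr Rpower; ring.
- have e := Rpower_plus (1 - 3 * eps) 2 nr; rewrite P2 in e.
  have e2 := Rpower_plus (1 - eps) (1 - eps) nr.
  have e3 := Rpower_plus (1 - eps + (1 - eps)) (1 - eps) nr.
  by rewrite -e -e2 -e3; congr Rpower; ring.
- have e := Rpower_plus 2 (1 - eps) nr; rewrite P2 in e.
  have e2 := Rpower_plus (2 + (1 - eps)) (1/5) nr.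
  by rewrite -e -e2; congr Rpower; ring.
split.
- have e := Rpower_plus (1/5) 3 nr; rewrite P3 in e.
  have e2 := Rpower_plus (1 - eps) (1 - eps) nr.
  have e3 := Rpower_plus (1 - eps + (1 - eps)) (1 - eps) nr.
  have e4 := Rpower_plus (1 - eps + (1 - eps) + (1 - eps)) (1 - eps) nr.
  rewrite -e -e2 -e3 -e4; apply: Rle_Rpower; lra.
- apply: Rle_trans (_ : Rpower nr (/2) <= _).
    rewrite Rpower_sqrt //.
    replace 16 with (sqrt (16 * 16)) by (rewrite sqrt_square; lra).
    apply: sqrt_le_1_alt; lra.
  apply: Rle_Rpower; lra.
- exact: exp_pos.
- exact: hnr.
Qed.
Lemma bpE n K C eps G (L : {set 'I_n * 'I_n}) x :
  bad_pairs K C eps G L (Nx L x) = [set S in bad_pairs K C eps G L setT | S \subset Nx L x].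
Proof. by apply/setP => S; rewrite !inE subsetT /= andbC. Qed.

Lemma btE n eps (L : {set 'I_n * 'I_n}) x :
  bad_triples eps L (Nx L x) = [set S in bad_triples eps L setT | S \subset Nx L x].
Proof. by apply/setP => S; rewrite !inE subsetT /= andbC. Qed.

Lemma forb_sum n K G (L : {set 'I_n * 'I_n}) (BP : {set {set 'I_n}}) :
  (forall P, P \in BP -> #|P| = 2%N) ->
  (\sum_(P in BP) #|[set c in forb_cycles K G L | P \subset c.2]| <= #|forb_cycles K G L|)%N.
Proof.
move=> h2; rewrite exch -sum1_card; apply: leq_sum => c.
rewrite inE => /and3P [/andP [_ /eqP c2] _ _].
rewrite -(cards1 c.2); apply: subset_leq_card; apply/subsetP => P.
rewrite !inE => /andP [PB Pc]; rewrite eqEcard Pc c2 h2 //.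
Qed.

Lemma card2 n : (2 * 'C(n, 2) <= n * n)%N.
Proof. rewrite -mul_bin_diag -[X in (_ <= X * _)%N]prednK ?leq_mul //. Abort.

Lemma binR2 n : INR 'C(n, 2) <= INR n * INR n / 2.
Proof.
have h : ('C(n, 2) * 2 <= n * n)%N.
  have := ffact_le n 2; rewrite -bin_ffact /= => h; by rewrite (_ : n ^ 2 = n * n)%N in h; last by rewrite !expnS expn0 muln1.
move/leP/le_INR: h => h; rewrite !mult_INR /= in h; lra.
Qed.

Lemma binR3 n : INR 'C(n, 3) <= INR n * INR n * INR n / 6.
Proof.
have h : ('C(n, 3) * 6 <= n * n * n)%N.
  have := ffact_le n 3; rewrite -bin_ffact /= => h.
  by rewrite (_ : n ^ 3 = n * n * n)%N in h; last by rewrite !expnS expn0 muln1 mulnA.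
move/leP/le_INR: h => h; rewrite !mult_INR /= in h; lra.
Qed.

Lemma pair_sum n (K : nat) C eps G (L : {set 'I_n * 'I_n}) (a b : R) :
  1 <= C -> 0 < a -> 0 < b -> 0 < INR n ->
  npow n (1 - 2 * eps) * INR n = a * a ->
  npow n (1 - 3 * eps) * (INR n * INR n) = a * a * a ->
  b * (INR n * INR n * INR n) <= a * a * a * a ->
  INR #|forb_cycles K G L| <= INR K * (INR n * INR n * a * b) ->
  INR (\sum_(x in [set: 'I_n]) #|bad_pairs K C eps G L (Nx L x)|)
    <= INR n * a * a / 2 + C * INR n * a * a.
Proof.
move=> hC ha hb hn e2 e3 hba hF.
set nr := INR n in hn e2 e3 hba hF *.
under eq_bigr do rewrite bpE.
rewrite DC.
set BP := bad_pairs K C eps G L setT.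
set FC := forb_cycles K G L.
set m1 := npow n (1 - 2 * eps).
set m3 := npow n (1 - 3 * eps).
have m1p : 0 <= m1 by apply: Rlt_le; apply: exp_pos.
have m3p : 0 < m3 by apply: exp_pos.
set k := C * nr * nr / (INR K * (a * a * a)).
have Kp : 0 <= INR K by apply: pos_INR.
have a3 : 0 < a * a * a by apply: Rmult_lt_0_compat; nra.
have kp : 0 <= k.
  rewrite /k; apply: Rmult_le_pos; first by nra.
  have [K0|K0] : INR K = 0 \/ 0 < INR K by lra.
  - by rewrite K0 Rmult_0_l Rinv_0; lra.
  - apply: Rlt_le; apply: Rinv_pos; nra.
set fo := fun P : {set 'I_n} => #|[set c in FC | P \subset c.2]|.
have per : forall P, P \in BP -> INR #|Gamma L P| <= m1 + k * INR (fo P).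
  move=> P; rewrite !inE /= => /and3P [_ _ hng]; move: hng; rewrite /good_pair /Defs.Rleb.
  case: Rle_dec => h1; case: Rle_dec => h2 //= _.
  -
    have [K0|K0] : INR K = 0 \/ 0 < INR K by lra.
    + exfalso; apply: h2; rewrite K0.
      have hfo : INR (fo P) <= INR #|FC|.
        apply: le_INR; apply/leP; apply: subset_leq_card; apply/subsetP => c.
        by rewrite inE => /andP [].
      rewrite /Rdiv !Rmult_0_l; apply: Rle_trans hfo _.
      by move: hF; rewrite K0 Rmult_0_l.
    + have h3 : INR K * m3 * INR #|Gamma L P| < C * INR (fo P).
        move: (Rnot_le_lt _ _ h2) => {}h2; rewrite /Rdiv in h2.
        change (npow n (1 - 3 * eps)) with m3 in h2.
        have eq : INR K * m3 * INR #|Gamma L P| = C * (INR K * / C * m3 * INR #|Gamma L P|).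
          field; lra.
        rewrite eq; apply: Rmult_lt_compat_l; first lra.
        exact: h2.
      have hGk : INR #|Gamma L P| <= k * INR (fo P).
        rewrite /k; apply: (Rmult_le_reg_r (INR K * (a * a * a))); first by nra.
        have eqk : k * INR (fo P) * (INR K * (a * a * a)) = C * nr * nr * INR (fo P).
          rewrite /k; field; nra.
        rewrite eqk -e3.
        have hpos : 0 < nr * nr by nra.
        have h4 := Rmult_lt_compat_r (nr * nr) _ _ hpos h3.
        apply: Rlt_le; apply: Rle_lt_trans (_ : _ <= INR K * m3 * INR #|Gamma L P| * (nr * nr)) _.
          by right; rewrite /m3; ring.
        apply: Rlt_le_trans h4 _; right; ring.
      have ? : 0 <= INR (fo P) by apply: pos_INR.
      apply: Rle_trans hGk _; rewrite -{1}(Rplus_0_l (k * INR (fo P))); apply: Rplus_le_compat_r; exact: m1p.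
  - have ? : 0 <= INR (fo P) by apply: pos_INR.
    move: (Rnot_le_lt _ _ h1) => {}h1; change (npow n (1 - 2 * eps)) with m1 in h1.
    have hk := Rmult_le_pos _ _ kp (pos_INR (fo P)).
    apply: Rlt_le; apply: Rlt_le_trans h1 _; rewrite -{1}(Rplus_0_r m1).
    exact: Rplus_le_compat_l.
  - have ? : 0 <= INR (fo P) by apply: pos_INR.
    move: (Rnot_le_lt _ _ h1) => {}h1; change (npow n (1 - 2 * eps)) with m1 in h1.
    have hk := Rmult_le_pos _ _ kp (pos_INR (fo P)).
    apply: Rlt_le; apply: Rlt_le_trans h1 _; rewrite -{1}(Rplus_0_r m1).
    exact: Rplus_le_compat_l.
rewrite INR_big.
apply: Rle_trans (_ : \big[Rplus/0]_(P in BP) (m1 + k * INR (fo P)) <= _).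
  exact: Rle_big.
rewrite big_splitR big_constR big_distrR -INR_big.
have hBP : INR #|BP| <= nr * nr / 2.
  apply: Rle_trans (binR2 n); apply: le_INR; apply/leP.
  rewrite -[X in 'C(X, 2)]card_ord -card_draws; apply: subset_leq_card.
  by apply/subsetP => P; rewrite !inE => /and3P [].
have hfo : INR (\sum_(P in BP) fo P) <= INR #|FC|.
  apply: le_INR; apply/leP; apply: forb_sum => P; rewrite !inE => /and3P [_ /eqP -> _].
  by [].
have hkF : k * INR #|FC| <= C * nr * a * a.
  have [K0|K0] : INR K = 0 \/ 0 < INR K by lra.
  - have ? : INR #|FC| <= 0 by move: hF; rewrite K0 Rmult_0_l.
    have ? : 0 <= INR #|FC| by apply: pos_INR.
    have e0 : INR #|FC| = 0 by lra.
    rewrite e0 Rmult_0_r; repeat apply: Rmult_le_pos; lra.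
  - apply: Rle_trans (_ : k * (INR K * (nr * nr * a * b)) <= _).
      by apply: Rmult_le_compat_l.
    have eq : k * (INR K * (nr * nr * a * b)) = C * nr * (b * (nr * nr * nr)) / (a * a).
      rewrite /k; field; split; nra.
    rewrite eq; apply: Rle_trans (_ : C * nr * (a * a * a * a) / (a * a) <= _).
      rewrite /Rdiv; apply: Rmult_le_compat_r.
        left; apply: Rinv_pos; nra.
      apply: Rmult_le_compat_l; [nra | exact: hba].
    right; field; nra.
have ? : 0 <= INR (\sum_(P in BP) fo P) by apply: pos_INR.
have ? : m1 * nr = a * a by [].
nra.
Qed.

Lemma triple_sum n eps (L : {set 'I_n * 'I_n}) (a : R) :
  0 < INR n -> npow n (1 - 3 * eps) * (INR n * INR n) = a * a * a ->
  INR (\sum_(x in [set: 'I_n]) #|bad_triples eps L (Nx L x)|) <= INR n * a * a * a / 6.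
Proof.
move=> hn e3.
under eq_bigr do rewrite btE.
rewrite DC INR_big.
set BT := bad_triples eps L setT.
have m3p : 0 < npow n (1 - 3 * eps) by apply: exp_pos.
apply: Rle_trans (_ : \big[Rplus/0]_(T in BT) npow n (1 - 3 * eps) <= _).
  apply: Rle_big => T; rewrite !inE /= => /and3P [_ _]; rewrite /good_triple /Defs.Rleb.
  by case: Rle_dec => // h _; apply: Rlt_le; apply: Rnot_le_lt.
rewrite big_constR.
have hBT : INR #|BT| <= INR n * INR n * INR n / 6.
  apply: Rle_trans (binR3 n); apply: le_INR; apply/leP.
  rewrite -[X in 'C(X, 3)]card_ord -card_draws; apply: subset_leq_card.
  by apply/subsetP => P; rewrite !inE => /and3P [].
apply: Rle_trans (_ : INR n * INR n * INR n / 6 * npow n (1 - 3 * eps) <= _).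
  apply: Rmult_le_compat_r; lra.
right; have -> : INR n * a * a * a / 6 = INR n * (npow n (1 - 3 * eps) * (INR n * INR n)) / 6.
  rewrite e3; field.
field.
Qed.
Lemma perx (C t D r B2 B3 P T : R) : 1 <= C -> 2 < t -> 0 <= r -> 0 <= P -> 0 <= T ->
  B2 * 2 = r * (r - 1) -> (2 <= r -> 3 * B3 = (r - 2) * B2) ->
  ~ (t <= r /\ P <= 400 / C * B2 /\ T <= 600 / C * B3) ->
  D * r - D * D / 2 - r / 2 <= t * t / 2 + C / 400 * P + C / (200 * (t - 2)) * T.
Proof.
move=> hC ht hr hP hT e2 e3 hno.
have sq : 0 <= (r - D) * (r - D) by apply: Rle_0_sqr.
have tang : D * r - D * D / 2 - r / 2 <= B2 by nra.
have u0 : 0 <= C / 400 * P.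
  apply: Rmult_le_pos => //; apply: Rmult_le_pos; [lra | left; apply: Rinv_pos; lra].
have w0 : 0 < C / (200 * (t - 2)).
  apply: Rmult_lt_0_compat; [lra | apply: Rinv_pos; lra].
have v0 : 0 <= C / (200 * (t - 2)) * T by apply: Rmult_le_pos; lra.
have tt : 0 <= t * t by nra.
apply: Rle_trans tang _.
destruct (Rlt_le_dec r t) as [hrt|hrt].
  have : B2 <= t * t / 2 by nra.
  lra.
destruct (Rle_dec P (400 / C * B2)) as [hp|hp].
  destruct (Rle_dec T (600 / C * B3)) as [hq|hq].
    by exfalso; apply: hno.
  move: (Rnot_le_lt _ _ hq) => {}hq.
  have e3' := e3 ltac:(lra).
  have hB3 : 600 / C * B3 = 200 / C * (r - 2) * B2.
    have -> : B3 = (r - 2) * B2 / 3 by lra.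
    field; lra.
  rewrite hB3 in hq.
  have h1 : 200 * (r - 2) * B2 < C * T.
    have -> : 200 * (r - 2) * B2 = C * (200 / C * (r - 2) * B2) by field; lra.
    apply: Rmult_lt_compat_l; lra.
  have B2p : 0 <= B2 by nra.
  have h2 : 200 * (t - 2) * B2 <= C * T by nra.
  have h3 : B2 <= C / (200 * (t - 2)) * T.
    apply: (Rmult_le_reg_l (200 * (t - 2))); first lra.
    have -> : 200 * (t - 2) * (C / (200 * (t - 2)) * T) = C * T by field; lra.
    lra.
  lra.
move: (Rnot_le_lt _ _ hp) => {}hp.
have h1 : B2 < C / 400 * P.
  have -> : B2 = C / 400 * (400 / C * B2) by field; lra.
  apply: Rmult_lt_compat_l; [|lra].
  apply: Rmult_lt_0_compat; lra.
lra.
Qed.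

Lemma final (C a nr SP ST : R) : 1 <= C -> 16 <= a -> 0 < nr -> 0 <= SP -> 0 <= ST ->
  SP <= nr * a * a / 2 + C * nr * a * a -> ST <= nr * a * a * a / 6 ->
  (C * a / 2 - 1 / 2) * (nr * (C * a / 2)) - nr * ((C * a / 2) * (C * a / 2) / 2)
   <= nr * ((a / 4) * (a / 4) / 2) + C / 400 * SP + C / (200 * (a / 4 - 2)) * ST -> False.
Proof.
move=> hC ha hn hSP hST bSP bST hS.
set w := C / (200 * (a / 4 - 2)) in hS.
have w0 : 0 <= w by rewrite /w; apply: Rmult_le_pos; [lra | left; apply: Rinv_pos; lra].
have hwa : w * a <= C / 25.
  rewrite /w; apply: (Rmult_le_reg_r (200 * (a / 4 - 2))); first lra.
  have -> : C / (200 * (a / 4 - 2)) * a * (200 * (a / 4 - 2)) = C * a by field; lra.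
  have -> : C / 25 * (200 * (a / 4 - 2)) = C * (2 * a - 16) by field.
  nra.
have X0 : 0 < nr * a * a by apply: Rmult_lt_0_compat; nra.
have h1 : w * ST <= C * (nr * a * a) / 150.
  apply: Rle_trans (_ : w * (nr * a * a * a / 6) <= _); first by apply: Rmult_le_compat_l.
  have -> : w * (nr * a * a * a / 6) = (w * a) * (nr * a * a) / 6 by field.
  have := Rmult_le_compat_r (nr * a * a) _ _ (Rlt_le _ _ X0) hwa. lra.
have h2 : C / 400 * SP <= C / 400 * (nr * a * a / 2 + C * nr * a * a).
  apply: Rmult_le_compat_l => //; apply: Rmult_le_pos; [lra | left; apply: Rinv_pos; lra].
set X := nr * a * a in X0 h1 h2 bSP bST.
have Y : nr * a <= X / 16.
  rewrite /X; have hh : nr * a * 16 <= nr * a * a by apply: Rmult_le_compat_l; nra.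
  lra.
have CX : X <= C * X by nra.
have CCX : C * X <= C * (C * X) by nra.
have CY : C * (nr * a) <= C * X / 16 by nra.
have e : (C * a / 2 - 1 / 2) * (nr * (C * a / 2)) - nr * ((C * a / 2) * (C * a / 2) / 2)
   = C * (C * X) / 8 - C * (nr * a) / 4 by rewrite /X; field.
have e' : nr * ((a / 4) * (a / 4) / 2) = X / 32 by rewrite /X; field.
have e'' : C / 400 * (nr * a * a / 2 + C * nr * a * a) = C * X / 800 + C * (C * X) / 400
  by rewrite /X; field.
lra.
Qed.
Lemma bin2R d : INR 'C(d, 2) * 2 = INR d * (INR d - 1).
Proof.
case: d => [|m]; first by simpl; ring.
have h := bin_ffact m.+1 2.
have -> : 2 = INR 2`! by simpl; ring.
rewrite -mult_INR multE h ffactnS ffactn1 -multE mult_INR S_INR; change (Init.Nat.pred (S m)) with m; ring.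
Qed.

Lemma bin3R d : 2 <= INR d -> 3 * INR 'C(d, 3) = (INR d - 2) * INR 'C(d, 2).
Proof.
move=> hd.
have h := mul_bin_left d 2.
have -> : 3 = INR 3 by simpl; ring.
rewrite -mult_INR multE h -multE mult_INR minus_INR //=.
apply/INR_le; simpl; lra.
Qed.

Lemma main_comb n (K : nat) C eps G (L : {set 'I_n * 'I_n}) (a b : R) :
  1 <= C -> 16 <= a -> 0 < b -> 256 <= INR n ->
  npow n (1 - 2 * eps) * INR n = a * a ->
  npow n (1 - 3 * eps) * (INR n * INR n) = a * a * a ->
  b * (INR n * INR n * INR n) <= a * a * a * a ->
  INR #|forb_cycles K G L| <= INR K * (INR n * INR n * a * b) ->
  INR #|L| = C / 2 * (INR n * a) ->
  exists x, a / 4 <= INR #|Nx L x| /\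
    INR #|bad_pairs K C eps G L (Nx L x)| <= 400 / C * INR 'C(#|Nx L x|, 2) /\
    INR #|bad_triples eps L (Nx L x)| <= 600 / C * INR 'C(#|Nx L x|, 3).
Proof.
move=> hC ha hb hn e2 e3 hba hF hL.
apply: NNPP => hno.
have hn0 : 0 < INR n by lra.
set D := C * a / 2.
set t := a / 4.
set w := C / (200 * (t - 2)).
have per : forall x : 'I_n, (D - 1/2) * INR #|Nx L x| + - (D * D / 2) <=
    t * t / 2 + (C / 400 * INR #|bad_pairs K C eps G L (Nx L x)|
                 + w * INR #|bad_triples eps L (Nx L x)|).
  move=> x.
  have t2 : 2 < t by rewrite /t; lra.
  have := @perx C t D (INR #|Nx L x|) (INR 'C(#|Nx L x|, 2)) (INR 'C(#|Nx L x|, 3))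
     (INR #|bad_pairs K C eps G L (Nx L x)|) (INR #|bad_triples eps L (Nx L x)|)
     hC t2 (pos_INR _) (pos_INR _) (pos_INR _)
     (bin2R _) (@bin3R _) (fun h => hno (ex_intro _ x h)).
  rewrite /w => h; lra.
have S := Rle_big (P := fun x => x \in [set: 'I_n]) (fun x _ => per x).
rewrite !big_splitR !big_distrR !big_constR -!INR_big sumdeg cardsT card_ord hL in S.
apply: (@final C a (INR n) (INR (\sum_(i in [set: 'I_n]) #|bad_pairs K C eps G L (Nx L i)|))
  (INR (\sum_(i in [set: 'I_n]) #|bad_triples eps L (Nx L i)|)) hC ha hn0 (pos_INR _) (pos_INR _)).
- have a0 : 0 < a by lra.
  exact: (pair_sum hC a0 hb hn0 e2 e3 hba hF).
- exact: (triple_sum L hn0 e3).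
- move: S; rewrite /w /t /D.
  have -> : (C * a / 2 - 1 / 2) * (C / 2 * (INR n * a)) = (C * a / 2 - 1 / 2) * (INR n * (C * a / 2)).
    field.
  move=> S; lra.
Qed.

Local Close Scope R_scope.

Theorem lemma3p2 (VH : finType) (EH : {set {set VH}}) (HH : uniform3 EH)
  (eps C : R) (Heps : Rle eps (1/5)) (HC : Rle 1 C) :
  exists n0 : nat, forall n : nat, n0 <= n ->
  forall (G : {set 'I_n * 'I_n * 'I_n}) (L : {set 'I_n * 'I_n}),
    INR #|L| = Rmult (Rdiv C 2) (npow n (2 - eps)) ->
    Rle (INR #|forb_cycles (KH VH) G L|) (INR (KH VH) * npow n (3 + 1/5 - eps)) ->
    exists Y' : {set 'I_n},
      Rle (npow n (1 - eps) / 4) (INR #|Y'|) /\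
      Rle (INR #|bad_pairs (KH VH) C eps G L Y'|) (400 / C * INR 'C(#|Y'|, 2)) /\
      Rle (INR #|bad_triples eps L Y'|) (600 / C * INR 'C(#|Y'|, 3)).
Proof.
exists 256%N => n hn G L hL hF.
have [e1 e2 e3 e4 [hba ha hb hnr]] := powfacts hn Heps.
rewrite e1 in hL; rewrite e4 in hF.
have [x hx] := main_comb HC ha hb hnr e2 e3 hba hF hL.
by exists (Nx L x).
Qed.
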